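(* Let $\Bbbk$ be a field of characteristic $2$, $G=\langle\sigma\rangle$ cyclic of order $4$ acting on $V=V_3$ so that on the dual basis $\sigma x_1=x_1+x_2$, $\sigma x_2=x_2+x_3$, $\sigma x_3=x_3$, and let $H=\langle\sigma^2\rangle$. Let $A=\Bbbk[N^G(x_1),N^G_H(x_2),x_3]$ where $N^G(x_1)=\prod_{i=0}^3\sigma^i(x_1)$ and $N^G_H(x_2)=x_2\,\sigma(x_2)=x_2(x_2+x_3)$, and let $u=x_1^2x_3+x_1x_3^2+x_2^3+x_2^2x_3$. Then $\Bbbk[V]^G$ is a free $A$-module with basis $\{1,u\}$; in particular $r(\Bbbk[V]^G,A)=2$ and $s(\Bbbk[V]^G,A)=3$.
   Context: For graded $A$ with $A_0=\Bbbk$ and finitely generated graded $A$-module $M$, expand the Hilbert series quotient $H(M,t)/H(A,t)=a_0+a_1(t-1)+\cdots$ about $t=1$; $r(M,A)=a_0$ and $s(M,A)=a_1$. *)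

(* Defs.v *)
From HB Require Import structures.
From mathcomp Require Import all_boot all_order all_algebra.
From mathcomp Require Import mpoly.
Set Implicit Arguments. Unset Strict Implicit. Unset Printing Implicit Defensive.
Import Order.TTheory GRing.Theory.
Local Open Scope ring_scope.

Section Defs.
Variable k : fieldType.

Definition x1 : {mpoly k[3]} := 'X_(0 : 'I_3).
Definition x2 : {mpoly k[3]} := 'X_(1 : 'I_3).
Definition x3 : {mpoly k[3]} := 'X_(2 : 'I_3).

Definition sigma (f : {mpoly k[3]}) : {mpoly k[3]} :=
  comp_mpoly [tuple x1 + x2; x2 + x3; x3] f.

Definition G_invariant (f : {mpoly k[3]}) : Prop :=
  forall i : nat, iter i sigma f = f.

Definition NG_x1 : {mpoly k[3]} := \prod_(i < 4) iter i sigma x1.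
Definition NGH_x2 : {mpoly k[3]} := x2 * sigma x2.

Definition u : {mpoly k[3]} :=
  x1 ^+ 2 * x3 + x1 * x3 ^+ 2 + x2 ^+ 3 + x2 ^+ 2 * x3.

Definition inA (f : {mpoly k[3]}) : Prop :=
  exists p : {mpoly k[3]}, f = comp_mpoly [tuple NG_x1; NGH_x2; x3] p.

Definition has_dim (P : {mpoly k[3]} -> Prop) (n : nat) : Prop :=
  exists b : 'I_n -> {mpoly k[3]},
    [/\ forall i, P (b i),
        (forall c : 'I_n -> k, \sum_(i < n) c i *: b i = 0 -> forall i, c i = 0)
      & forall f, P f -> exists c : 'I_n -> k, f = \sum_(i < n) c i *: b i].

Definition hilbert_fun (P : {mpoly k[3]} -> Prop) (h : nat -> nat) : Prop :=
  forall d : nat, has_dim (fun f => P f /\ f \is d.-homog) (h d).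

End Defs.

(* Main.v *)
Require Import Defs.
From HB Require Import structures.
From mathcomp Require Import all_boot all_order all_algebra.
From mathcomp Require Import mpoly.
From mathcomp Require Import ring zify.
Import GRing.Theory.
Local Open Scope ring_scope.

Section Generic.
Lemma poly_morph_eq (R : nzRingType) (S : nzRingType) (f g : {poly R} -> S)
  (fD : {morph f : x y / x + y}) (gD : {morph g : x y / x + y})
  (fM : {morph f : x y / x * y}) (gM : {morph g : x y / x * y})
  (fC : forall c, f c%:P = g c%:P) (fX : f 'X = g 'X) : f =1 g.
Proof.
elim/poly_ind => [|p c IH]; first by rewrite -polyC0 fC.
by rewrite fD gD fM gM IH fX fC.
Qed.
End Generic.

Section R2World.
Variable k : fieldType.
Hypothesis two0 : (2%:R : k) = 0.
Local Notation R1 := {poly k}.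
Local Notation R2 := {poly R1}.

Local Notation z3 := (('X : R1)%:P : R2).
Definition y2 : R2 := 'X * ('X + z3).
Local Notation tau := (comp_poly ('X + z3)).

Lemma two2 : (2%:R : R2) = 0.
Proof. by rewrite -!polyC_natr two0 !polyC0. Qed.
Lemma add2 (x : R2) : x + x = 0.
Proof. by rewrite -mulr2n -mulr_natr two2 mulr0. Qed.

Lemma tauC c : tau c%:P = c%:P. Proof. exact: comp_polyC. Qed.
Lemma tauX : tau 'X = 'X + z3. Proof. exact: comp_polyX. Qed.
Lemma tauD a b : tau (a + b) = tau a + tau b. Proof. exact: comp_polyD. Qed.
Lemma tauB a b : tau (a - b) = tau a - tau b. Proof. exact: comp_polyB. Qed.
Lemma tauM a b : tau (a * b) = tau a * tau b. Proof. exact: comp_polyM. Qed.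
Lemma tauy : tau y2 = y2.
Proof.
rewrite /y2 tauM tauD tauX tauC.
have -> : 'X + z3 + z3 = 'X by rewrite -addrA add2 addr0.
by rewrite mulrC.
Qed.
Lemma size_tau g : size (tau g) = size g.
Proof. by rewrite size_comp_poly2 // size_XaddC. Qed.

Lemma size_y2 : size y2 = 3%N.
Proof. by rewrite /y2 size_mul ?size_polyX ?size_XaddC // -?size_poly_eq0 ?size_polyX ?size_XaddC. Qed.
Lemma monic_y2 : y2 \is monic.
Proof. by rewrite /y2 monicMl ?monicX ?monicXaddC. Qed.
Lemma y2_neq0 : y2 != 0.
Proof. by rewrite -size_poly_eq0 size_y2. Qed.

Definition inB (g : R2) := exists q : R2, g = q \Po y2.

Lemma inB_C c : inB c%:P. Proof. by exists c%:P; rewrite comp_polyC. Qed.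
Lemma inB_y : inB y2. Proof. by exists 'X; rewrite comp_polyX. Qed.
Lemma inB_D a b : inB a -> inB b -> inB (a + b).
Proof. by move=> [p ->] [q ->]; exists (p + q); rewrite comp_polyD. Qed.
Lemma inB_B a b : inB a -> inB b -> inB (a - b).
Proof. by move=> [p ->] [q ->]; exists (p - q); rewrite comp_polyB. Qed.
Lemma inB_M a b : inB a -> inB b -> inB (a * b).
Proof. by move=> [p ->] [q ->]; exists (p * q); rewrite comp_polyM. Qed.
Lemma inB_0 : inB 0. Proof. by rewrite -polyC0; apply: inB_C. Qed.

Lemma tau_inB g : inB g -> tau g = g.
Proof. by move=> [q ->]; rewrite -comp_polyA tauy. Qed.

Lemma inB_odd {g} : inB g -> g != 0 -> odd (size g).
Proof.
move=> [q ->] nz.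
have nzq : q != 0 by apply: contraNneq nz => ->; rewrite comp_poly0.
have := size_comp_poly q y2; rewrite size_y2 /= => e.
by rewrite (polySpred nz) e /= muln2 odd_double.
Qed.

Lemma inB_par a b : inB a -> inB b -> a = 'X * b -> b = 0.
Proof.
move=> Ha Hb e; apply/eqP; apply: contraT => nzb.
have nza : a != 0 by rewrite e mulf_neq0 ?polyX_eq0.
have := inB_odd Ha nza; rewrite e mulrC size_mulX //= (inB_odd Hb nzb) //.
Qed.

Lemma size_le2 (p : R2) : (size p <= 2)%N -> p = (p`_1)%:P * 'X + (p`_0)%:P.
Proof.
move=> hs; apply/polyP => i; rewrite coefD coefMX !coefC.
case: i => [|[|i]] //=; rewrite ?coefC ?addr0 ?add0r //=.
by rewrite nth_default ?addr0 // (leq_trans hs).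
Qed.

Lemma decomp2 g : exists g0 g1, [/\ inB g0, inB g1 & g = g0 + 'X * g1].
Proof.
elim: {g}(size g) {-2}g (leqnn (size g)) => [|n IH] g hs.
  move: hs; rewrite leqn0 size_poly_eq0 => /eqP ->.
  by exists 0, 0; split; rewrite ?mulr0 ?addr0 //; apply: inB_0.
have [->|nzg] := eqVneq g 0.
  by exists 0, 0; split; rewrite ?mulr0 ?addr0 //; apply: inB_0.
have := Pdiv.IdomainMonic.divp_eq monic_y2 g.
set D := g %/ y2; set Rm := g %% y2 => eg.
have hR : (size Rm <= 2)%N by have := ltn_modpN0 g y2_neq0; rewrite size_y2.
have hD : (size D <= n)%N.
  by rewrite /D size_divp ?y2_neq0 // size_y2 /= leq_subLR (leq_trans hs) // add2n.
have [D0 [D1 [H0 H1 eD]]] := IH D hD.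
exists (D0 * y2 + (Rm`_0)%:P), (D1 * y2 + (Rm`_1)%:P); split.
- by apply: inB_D; [apply: inB_M => //; apply: inB_y | apply: inB_C].
- by apply: inB_D; [apply: inB_M => //; apply: inB_y | apply: inB_C].
rewrite eg eD {1}[Rm](size_le2 _ hR); ring.
Qed.

Lemma tau_diff g : exists h, inB h /\ tau g - g = z3 * h.
Proof.
have [g0 [g1 [H0 H1 ->]]] := decomp2 g.
exists g1; split => //.
rewrite tauD tauM tauX !tau_inB //; ring.
Qed.

Lemma z3_neq0 : z3 != 0. Proof. by rewrite polyC_eq0 polyX_eq0. Qed.

Lemma inv2 g : tau g = g -> inB g.
Proof.
move=> hg; have [g0 [g1 [H0 H1 eg]]] := decomp2 g.
have : tau g - g = z3 * g1 by rewrite eg tauD tauM tauX !tau_inB //; ring.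
rewrite hg subrr => /esym /eqP; rewrite mulf_eq0 (negbTE z3_neq0) /= => /eqP e1.
by rewrite eg e1 mulr0 addr0.
Qed.

Lemma div3 h r : inB h -> inB r -> z3 * h = y2 * r -> exists s, inB s /\ r = z3 * s.
Proof.
move=> [qh ->] [qr ->] e.
have e2 : z3 * qh = 'X * qr.
  apply/eqP; rewrite -subr_eq0 -(comp_poly_eq0 _ (q := y2)); last by rewrite size_y2.
  by rewrite comp_polyB !comp_polyM comp_polyC comp_polyX e subrr.
have h0 : qh`_0 = 0.
  have := congr1 (fun p : R2 => p`_0) e2; rewrite coefCM coefXM /=.
  by move/eqP; rewrite mulf_eq0 polyX_eq0 /= => /eqP.
have eqh : qh = drop_poly 1 qh * 'X.
  rewrite -{1}(poly_take_drop 1 qh) expr1.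
  suff -> : take_poly 1 qh = 0 by rewrite add0r.
  by apply/polyP => i; rewrite coef_take_poly coef0; case: i.
exists (drop_poly 1 qh \Po y2); split; first by exists (drop_poly 1 qh).
have : qr = z3 * drop_poly 1 qh.
  apply: (@mulIf _ 'X); first by rewrite polyX_eq0.
  by rewrite mulrC -e2 {1}eqh mulrA.
by move=> ->; rewrite comp_polyM comp_polyC.
Qed.

Local Notation R3 := {poly R2}.
Local Notation x2P := (('X : R2)%:P : R3).
Local Notation z3P := (z3%:P : R3).

Definition sig (F : R3) : R3 := (map_poly tau F) \Po ('X + x2P).

Lemma sigC c : sig c%:P = (tau c)%:P.
Proof. by rewrite /sig map_polyC comp_polyC. Qed.
Lemma sigX : sig 'X = 'X + x2P.
Proof. by rewrite /sig map_polyX comp_polyX. Qed.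
Lemma sigD a b : sig (a + b) = sig a + sig b.
Proof. by rewrite /sig rmorphD comp_polyD. Qed.
Lemma sigB a b : sig (a - b) = sig a - sig b.
Proof. by rewrite /sig rmorphB comp_polyB. Qed.
Lemma sigM a b : sig (a * b) = sig a * sig b.
Proof. by rewrite /sig rmorphM comp_polyM. Qed.
Lemma sig1 : sig 1 = 1.
Proof. by rewrite -polyC1 sigC tauC. Qed.
Lemma sigXn a n : sig (a ^+ n) = sig a ^+ n.
Proof. by elim: n => [|n IH]; rewrite ?expr0 ?sig1 // !exprS sigM IH. Qed.

Lemma two3 : (2%:R : R3) = 0.
Proof. by rewrite -!polyC_natr two0 !polyC0. Qed.
Lemma add3 (x : R3) : x + x = 0.
Proof. by rewrite -mulr2n -mulr_natr two3 mulr0. Qed.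

Lemma tau_tau g : tau (tau g) = g.
Proof.
rewrite -comp_polyA comp_polyD comp_polyX comp_polyC -addrA add2 addr0.
exact: comp_polyXr.
Qed.
Lemma tau_inj : injective tau.
Proof. by move=> a b e; rewrite -(tau_tau a) e tau_tau. Qed.

Lemma size_sig F : size (sig F) = size F.
Proof.
rewrite /sig size_comp_poly2 ?size_XaddC //.
apply: size_map_inj_poly; first exact: tau_inj.
by rewrite -polyC0 tauC.
Qed.

Definition N3 : R3 := 'X * ('X + x2P) * ('X + z3P) * ('X + (('X : R2) + z3)%:P).
Definition Y3 : R3 := y2%:P.
Definition U3 : R3 := 'X^2 * z3P + 'X * (z3 ^+ 2)%:P + (('X : R2) * y2)%:P.

Lemma sigN3 : sig N3 = N3.
Proof.
have -> : sig N3 = ('X + x2P) * ('X + z3P + 2%:R * x2P) * ('X + x2P + z3P)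
                   * ('X + 2%:R * (x2P + z3P)).
  rewrite /N3 !sigM !sigD sigX !sigC tauX tauC tauD tauX tauC; ring.
rewrite two3 !mul0r !addr0 /N3; ring.
Qed.

Lemma monicN3 : N3 \is monic.
Proof. by rewrite /N3 !monicMl ?monicX ?monicXaddC. Qed.
Lemma size_N3 : size N3 = 5%N.
Proof.
rewrite /N3 !size_monicM ?monicX ?monicXaddC ?size_polyX ?size_XaddC //;
  try (by rewrite -size_poly_eq0 ?size_XaddC);
  try (by rewrite monicMl ?monicX ?monicXaddC);
  try (by rewrite !monicMl ?monicX ?monicXaddC).
Qed.
Lemma N3_neq0 : N3 != 0.
Proof. by rewrite -size_poly_eq0 size_N3. Qed.

Lemma sigY3 : sig Y3 = Y3.
Proof. by rewrite /Y3 sigC tauy. Qed.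

Lemma sigU3 : sig U3 = U3.
Proof.
have -> : sig U3 = U3 + 2%:R * ('X * x2P * z3P + 2%:R * x2P^+2 * z3P + 3%:R * x2P * z3P^+2 + z3P^+3).
  rewrite /U3 /y2 !sigD !sigM !sigC sigX !tauM !tauD tauX !tauC; ring.
by rewrite two3 mul0r addr0.
Qed.
Definition E (P : R3) : R3 := (map_poly (comp_poly y2) P) \Po N3.
Definition inA3 (F : R3) := exists P, F = E P.

Lemma E_C c : E c%:P = (c \Po y2)%:P.
Proof. by rewrite /E map_polyC comp_polyC. Qed.
Lemma E_X : E 'X = N3.
Proof. by rewrite /E map_polyX comp_polyX. Qed.
Lemma E_D a b : E (a + b) = E a + E b.
Proof. by rewrite /E rmorphD comp_polyD. Qed.
Lemma E_B a b : E (a - b) = E a - E b.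
Proof. by rewrite /E rmorphB comp_polyB. Qed.
Lemma E_M a b : E (a * b) = E a * E b.
Proof. by rewrite /E rmorphM comp_polyM. Qed.

Lemma inA3_D a b : inA3 a -> inA3 b -> inA3 (a + b).
Proof. by move=> [p ->] [q ->]; exists (p + q); rewrite E_D. Qed.
Lemma inA3_B a b : inA3 a -> inA3 b -> inA3 (a - b).
Proof. by move=> [p ->] [q ->]; exists (p - q); rewrite E_B. Qed.
Lemma inA3_M a b : inA3 a -> inA3 b -> inA3 (a * b).
Proof. by move=> [p ->] [q ->]; exists (p * q); rewrite E_M. Qed.
Lemma inA3_C c : inB c -> inA3 c%:P.
Proof. by move=> [q ->]; exists q%:P; rewrite E_C. Qed.
Lemma inA3_N3 : inA3 N3. Proof. by exists 'X; rewrite E_X. Qed.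

Lemma compy_inj : injective (comp_poly y2).
Proof.
move=> a b e; apply/eqP; rewrite -subr_eq0 -(comp_poly_eq0 _ (q := y2)) ?size_y2 //.
by rewrite comp_polyB e subrr.
Qed.

Lemma size_E P : P != 0 -> size (E P) = ((size P).-1 * 4).+1.
Proof.
move=> nz.
have sm : size (map_poly (comp_poly y2) P) = size P.
  by apply: size_map_inj_poly; [exact: compy_inj | rewrite comp_poly0].
have nzm : map_poly (comp_poly y2) P != 0 by rewrite -size_poly_eq0 sm size_poly_eq0.
have := size_comp_poly (map_poly (comp_poly y2) P) N3.
rewrite size_N3 sm /= => e.
rewrite /E (polySpred _) ?e // comp_poly_eq0 ?size_N3 //.
Qed.

Lemma inA3_mod a : inA3 a -> a != 0 -> (size a %% 4 = 1)%N.
Proof.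
move=> [P ->] nz.
have nzP : P != 0 by apply: contraNneq nz => ->; rewrite /E rmorph0 comp_poly0.
by rewrite size_E // -addn1 modnMDl.
Qed.

Lemma size_U3 : size U3 = 3%N.
Proof.
have -> : U3 = (z3P * 'X + (z3 ^+ 2)%:P) * 'X + (('X : R2) * y2)%:P.
  by rewrite /U3; ring.
have h : (z3P * 'X + (z3 ^+ 2)%:P == 0) = false.
  by rewrite -size_poly_eq0 size_MXaddC polyC_eq0 (negbTE z3_neq0) /= size_polyC z3_neq0.
by rewrite size_MXaddC h /= size_MXaddC polyC_eq0 (negbTE z3_neq0) /= size_polyC z3_neq0.
Qed.
Lemma U3_neq0 : U3 != 0. Proof. by rewrite -size_poly_eq0 size_U3. Qed.

Lemma unique3 a b : inA3 a -> inA3 b -> a = b * U3 -> b = 0.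
Proof.
move=> Ha Hb e; apply/eqP; apply: contraT => nzb.
have nza : a != 0 by rewrite e mulf_neq0 ?U3_neq0.
have h1 := inA3_mod _ Ha nza; have h2 := inA3_mod _ Hb nzb.
move: h1; rewrite e size_mul ?U3_neq0 // size_U3 addn3 /=.
by rewrite -addn2 -modnDml h2.
Qed.

Lemma size_le4 (p : R3) : (size p <= 4)%N ->
  p = (p`_0)%:P + (p`_1)%:P * 'X + (p`_2)%:P * 'X^2 + (p`_3)%:P * 'X^3.
Proof.
move=> hs; apply/polyP => i; rewrite !coefD !coefCM !coefXn coefX !coefC.
case: i => [|[|[|[|i]]]] /=; rewrite ?mulr0 ?mulr1 ?addr0 ?add0r //.
by rewrite nth_default // (leq_trans hs).
Qed.

Lemma cub0 (c0 c1 c2 c3 : R2) :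
  c0%:P + c1%:P * 'X + c2%:P * 'X^2 + c3%:P * 'X^3 = 0 ->
  [/\ c0 = 0, c1 = 0, c2 = 0 & c3 = 0].
Proof.
move=> e.
have co i := congr1 (fun p : R3 => p`_i) e.
have := co 0%N; have := co 1%N; have := co 2%N; have := co 3%N.
rewrite !coefD !coefCM !coefXn !coefX !coefC /=.
by rewrite !mulr0 !mulr1 !addr0 !add0r => -> -> -> ->.
Qed.
Lemma eq_viaP (x y z : R2) : x - y = z -> z = 0 -> x = y.
Proof. by move=> e1 e2; apply/eqP; rewrite -subr_eq0 e1 e2. Qed.
Lemma eq_viaN (x y z : R2) : x - y = - z -> z = 0 -> x = y.
Proof. by move=> e1 e2; apply/eqP; rewrite -subr_eq0 e1 e2 oppr0. Qed.
Lemma three2 : (3%:R : R2) = 1.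
Proof. by rewrite -[3%N]/(1 + 2)%N natrD two2 addr0. Qed.
Lemma inB_z3 : inB z3. Proof. exact: inB_C. Qed.
Lemma inA3_0 : inA3 0. Proof. by exists 0; rewrite /E rmorph0 comp_poly0. Qed.

Ltac gen_tau := repeat match goal with |- context [comp_poly ?q ?r] =>
  let T := fresh "T" in move: (comp_poly q r) => T end.

Lemma base3 F : sig F = F -> (size F <= 4)%N ->
  exists a b, [/\ inA3 a, inA3 b & F = a + b * U3].
Proof.
move=> hF hs.
have [r0 [r1 [r2 [r3 eF]]]] : exists r0 r1 r2 r3,
    F = r0%:P + r1%:P * 'X + r2%:P * 'X^2 + r3%:P * 'X^3.
  by exists F`_0, F`_1, F`_2, F`_3; exact: size_le4.
have key : sig F - F =
   (tau r0 + 'X * tau r1 + 'X ^+ 2 * tau r2 + 'X ^+ 3 * tau r3 - r0)%:P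
   + (tau r1 + 2%:R * 'X * tau r2 + 3%:R * 'X ^+ 2 * tau r3 - r1)%:P * 'X
   + (tau r2 + 3%:R * 'X * tau r3 - r2)%:P * 'X^2 + (tau r3 - r3)%:P * 'X^3.
  by rewrite eF !sigD !sigM ?sigXn !sigC !sigX; gen_tau; ring.
move: key; rewrite hF subrr => /esym /cub0 [E0 E1 E2 E3].
have t3 : tau r3 = r3 by apply/eqP; rewrite -subr_eq0 E3.
have B3 := inv2 _ t3.
have [h [Hh eh]] := tau_diff r2.
have r30 : r3 = 0.
  apply: (inB_par (0 - z3 * h) r3) => //.
    by apply: inB_B; [exact: inB_0 | apply: inB_M; [exact: inB_z3 | exact: Hh]].
  apply: (eq_viaN _ _ _ _ E2); rewrite -eh t3 three2; gen_tau; ring.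
have t2 : tau r2 = r2.
  apply: (eq_viaP _ _ _ _ E2); rewrite r30 comp_poly0; gen_tau; ring.
have B2 := inv2 _ t2.
have t1 : tau r1 = r1.
  apply: (eq_viaP _ _ _ _ E1); rewrite r30 comp_poly0 two2; gen_tau; ring.
have B1 := inv2 _ t1.
have [h0 [Hh0 eh0]] := tau_diff r0.
have teq0 : tau r0 = z3 * h0 + r0 by rewrite -eh0; gen_tau; ring.
have r1e : r1 - z3 * r2 = 0.
  apply: (inB_par (0 - z3 * h0 - y2 * r2) (r1 - z3 * r2)).
  - apply: inB_B; last by apply: inB_M; [exact: inB_y | exact: B2].
    by apply: inB_B; [exact: inB_0 | apply: inB_M; [exact: inB_z3 | exact: Hh0]].
  - by apply: inB_B => //; apply: inB_M; [exact: inB_z3 | exact: B2].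
  apply: (eq_viaN _ _ _ _ E0); rewrite teq0 t1 t2 r30 comp_poly0 /y2; gen_tau; ring.
have r1z : r1 = z3 * r2 by apply/eqP; rewrite -subr_eq0 r1e.
have [s [Bs r2s]] : exists s, inB s /\ r2 = z3 * s.
  apply: (div3 (0 - h0) r2) => //.
    by apply: inB_B; [exact: inB_0 | exact: Hh0].
  apply: (eq_viaN _ _ _ _ E0); rewrite teq0 t1 t2 r30 comp_poly0 r1z /y2; gen_tau; ring.
pose c := r0 - s * ('X * y2).
have eFc : F = c%:P + s%:P * U3.
  by rewrite eF r30 r1z r2s /U3 /c; gen_tau; ring.
have tc : tau c = c.
  have : sig c%:P = c%:P.
    have -> : c%:P = F - s%:P * U3 by rewrite eFc; gen_tau; ring.
    by rewrite sigB sigM hF sigC (tau_inB _ Bs) sigU3.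
  by rewrite sigC => /polyC_inj.
exists c%:P, s%:P; split => //; apply: inA3_C => //; exact: inv2.
Qed.

Lemma aux_eq (a b c d n : R3) : a * n + b = c * n + d -> (a - c) * n = d - b.
Proof.
move=> e; apply/eqP; rewrite -subr_eq0.
have -> : (a - c) * n - (d - b) = (a * n + b) - (c * n + d) by ring.
by rewrite e subrr.
Qed.

Lemma span3 F : sig F = F -> exists a b, [/\ inA3 a, inA3 b & F = a + b * U3].
Proof.
elim: {F}(size F) {-2}F (leqnn (size F)) => [|n IH] F hs hF.
  move: hs; rewrite leqn0 size_poly_eq0 => /eqP ->.
  by exists 0, 0; split; rewrite ?mul0r ?addr0 //; exact: inA3_0.
have [hs4|hs4] := leqP (size F) 4; first exact: base3.
have := Pdiv.IdomainMonic.divp_eq monicN3 F.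
set D := F %/ N3; set Rm := F %% N3 => eF.
have hR : (size Rm < 5)%N by rewrite -size_N3 ltn_modpN0 ?N3_neq0.
have hD : (size D <= n)%N.
  by rewrite /D size_divp ?N3_neq0 // size_N3 /= leq_subLR (leq_trans hs) // add4n ltnS -addn3 leq_addr.
have e2 : sig D * N3 + sig Rm = D * N3 + Rm by rewrite -{1}sigN3 -sigM -sigD -eF hF.
have e3 : (sig D - D) * N3 = Rm - sig Rm.
  by apply: aux_eq.
have hDD : sig D = D.
  apply/eqP; rewrite -subr_eq0; apply/negPn/negP => nz.
  have := size_mul nz N3_neq0; rewrite e3 size_N3 addnS /= => e4.
  have : (size (Rm - sig Rm)%R < 5)%N.
    by apply: leq_ltn_trans (size_polyD _ _) _; rewrite size_polyN gtn_max hR size_sig hR.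
  by rewrite e4 addnC -[5%N]/(4 + 1)%N ltn_add2l ltnS leqn0 size_poly_eq0 (negbTE nz).
have hRR : sig Rm = Rm.
  by apply/eqP; rewrite eq_sym -subr_eq0 -e3 hDD subrr mul0r.
have [a1 [b1 [Ha1 Hb1 e1]]] := IH D hD hDD.
have [a2 [b2 [Ha2 Hb2 e5]]] := base3 Rm hRR (ltnSE hR).
exists (a1 * N3 + a2), (b1 * N3 + b2); split.
- by apply: inA3_D => //; apply: inA3_M => //; exact: inA3_N3.
- by apply: inA3_D => //; apply: inA3_M => //; exact: inA3_N3.
by rewrite eF e1 e5; move: (a1) (b1) (a2) (b2) N3 U3 => x1 x2 x3 x4 x5 x6; ring.
Qed.
End R2World.


Lemma mpoly_morph_eq (k : fieldType) (S : comNzRingType) (f g : {mpoly k[3]} -> S)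
  (fD : {morph f : x y / x + y}) (gD : {morph g : x y / x + y})
  (fM : {morph f : x y / x * y}) (gM : {morph g : x y / x * y})
  (f1 : f 1 = 1) (g1 : g 1 = 1)
  (fC : forall c, f c%:MP = g c%:MP) (fX : forall i, f 'X_i = g 'X_i) : f =1 g.
Proof.
have f0 : f 0 = 0 by apply: (@addrI _ (f 0)); rewrite -fD !addr0.
have g0 : g 0 = 0 by apply: (@addrI _ (g 0)); rewrite -gD !addr0.
have fXn x n : f (x ^+ n) = f x ^+ n.
  by elim: n => [|n IH]; rewrite ?expr0 // !exprS fM IH.
have gXn x n : g (x ^+ n) = g x ^+ n.
  by elim: n => [|n IH]; rewrite ?expr0 // !exprS gM IH.
move=> p; rewrite [p]mpolyE.
rewrite (big_morph f fD f0) (big_morph g gD g0); apply: eq_bigr => m _.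
rewrite -mul_mpolyC fM gM fC mpolyXE_id (big_morph f fM f1) (big_morph g gM g1).
by congr (_ * _); apply: eq_bigr => i _; rewrite fXn gXn fX.
Qed.

Section Transfer.
Variable k : fieldType.
Hypothesis two0 : (2%:R : k) = 0.
Local Notation R1 := {poly k}.
Local Notation R2 := {poly R1}.
Local Notation R3 := {poly R2}.
Local Notation MP := {mpoly k[3]}.
Local Notation z3 := (('X : R1)%:P : R2).
Local Notation x2P := (('X : R2)%:P : R3).
Local Notation z3P := (z3%:P : R3).
Local Notation tau := (comp_poly ('X + z3)).

Definition Phi : {rmorphism MP -> R3} :=
  mmap (polyC \o polyC \o (@polyC k)) (tnth [tuple ('X : R3); x2P; z3P]).
Definition Psi1 : {rmorphism R1 -> MP} := horner_eval (x3 k) \o map_poly (@mpolyC 3 k).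
Definition Psi2 : {rmorphism R2 -> MP} := horner_eval (x2 k) \o map_poly Psi1.
Definition Psi : {rmorphism R3 -> MP} := horner_eval (x1 k) \o map_poly Psi2.

Lemma PhiC c : Phi c%:MP = c%:P%:P%:P. Proof. by rewrite /Phi /= mmapC. Qed.
Lemma Phi_x1 : Phi (x1 k) = 'X. Proof. by rewrite /Phi /= /x1 mmapX mmap1U. Qed.
Lemma Phi_x2 : Phi (x2 k) = x2P. Proof. by rewrite /Phi /= /x2 mmapX mmap1U. Qed.
Lemma Phi_x3 : Phi (x3 k) = z3P. Proof. by rewrite /Phi /= /x3 mmapX mmap1U. Qed.

Lemma Psi1C c : Psi1 c%:P = c%:MP. Proof. by rewrite /= map_polyC /horner_eval hornerC. Qed.
Lemma Psi1X : Psi1 'X = x3 k. Proof. by rewrite /= map_polyX /horner_eval hornerX. Qed.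
Lemma Psi2C c : Psi2 c%:P = Psi1 c. Proof. by rewrite /= map_polyC /horner_eval hornerC. Qed.
Lemma Psi2X : Psi2 'X = x2 k. Proof. by rewrite /= map_polyX /horner_eval hornerX. Qed.
Lemma PsiC c : Psi c%:P = Psi2 c. Proof. by rewrite /= map_polyC /horner_eval hornerC. Qed.
Lemma PsiX : Psi 'X = x1 k. Proof. by rewrite /= map_polyX /horner_eval hornerX. Qed.

Lemma PhiPsi1 r : Phi (Psi1 r) = r%:P%:P.
Proof.
apply: (@poly_morph_eq _ _ (fun r => Phi (Psi1 r)) (fun r => r%:P%:P)) => //.
- by move=> a b; rewrite !rmorphD.
- by move=> a b; rewrite !polyCD.
- by move=> a b; rewrite !rmorphM.
- by move=> a b; rewrite !polyCM.
- by move=> c; rewrite Psi1C PhiC.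
- by rewrite Psi1X Phi_x3.
Qed.
Lemma PhiPsi2 g : Phi (Psi2 g) = g%:P.
Proof.
apply: (@poly_morph_eq _ _ (fun r => Phi (Psi2 r)) (fun r => r%:P)) => //.
- by move=> a b; rewrite !rmorphD.
- by move=> a b; rewrite !polyCD.
- by move=> a b; rewrite !rmorphM.
- by move=> a b; rewrite !polyCM.
- by move=> c; rewrite Psi2C PhiPsi1.
- by rewrite Psi2X Phi_x2.
Qed.
Lemma PhiPsi F : Phi (Psi F) = F.
Proof.
apply: (@poly_morph_eq _ _ (fun r => Phi (Psi r)) id) => //.
- by move=> a b; rewrite !rmorphD.
- by move=> a b; rewrite !rmorphM.
- by move=> c; rewrite PsiC PhiPsi2.
- by rewrite PsiX Phi_x1.
Qed.
Lemma PsiPhi p : Psi (Phi p) = p.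
Proof.
apply: (@mpoly_morph_eq _ _ (fun p => Psi (Phi p)) id) => //.
- by move=> a b; rewrite !rmorphD.
- by move=> a b; rewrite !rmorphM.
- by rewrite !rmorph1.
- by move=> c; rewrite PhiC PsiC Psi2C Psi1C.
case=> [[|[|[|i]]] hi] //.
- by rewrite (_ : 'X_(Ordinal hi) = x1 k) ?Phi_x1 ?PsiX //; congr 'X__; apply: val_inj.
- by rewrite (_ : 'X_(Ordinal hi) = x2 k) ?Phi_x2 ?PsiC ?Psi2X //; congr 'X__; apply: val_inj.
- by rewrite (_ : 'X_(Ordinal hi) = x3 k) ?Phi_x3 ?PsiC ?Psi2C ?Psi1X //; congr 'X__; apply: val_inj.
Qed.
Lemma Phi_inj : injective Phi.
Proof. by move=> a b e; rewrite -(PsiPhi a) e PsiPhi. Qed.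

Local Notation sg := (sig k).

Lemma Phi_sigma f : Phi (sigma f) = sg (Phi f).
Proof.
apply: (@mpoly_morph_eq _ _ (fun f => Phi (sigma f)) (fun f => sg (Phi f))).
- by move=> a b; rewrite /sigma !rmorphD.
- by move=> a b; rewrite rmorphD sigD.
- by move=> a b; rewrite /sigma !rmorphM.
- by move=> a b; rewrite rmorphM sigM.
- by rewrite /sigma !rmorph1.
- by rewrite rmorph1 sig1.
- by move=> c; rewrite /sigma comp_mpolyC PhiC sigC tauC.
case=> [[|[|[|i]]] hi] //; rewrite /sigma comp_mpolyXU /=.
- rewrite (_ : 'X_(Ordinal hi) = x1 k) ?Phi_x1; last by congr 'X__; apply: val_inj.
  by rewrite sigX rmorphD Phi_x1 Phi_x2.
- rewrite (_ : 'X_(Ordinal hi) = x2 k) ?Phi_x2; last by congr 'X__; apply: val_inj.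
  by rewrite sigC tauX rmorphD Phi_x2 Phi_x3 polyCD.
- rewrite (_ : 'X_(Ordinal hi) = x3 k) ?Phi_x3; last by congr 'X__; apply: val_inj.
  by rewrite sigC tauC.
Qed.

Lemma Phi_iter n f : Phi (iter n (@sigma k) f) = iter n sg (Phi f).
Proof. by elim: n => [|n IH] //=; rewrite Phi_sigma IH. Qed.

Lemma two3' : (2%:R : R3) = 0.
Proof. by rewrite -!polyC_natr two0 !polyC0. Qed.

Lemma Phi_NG : Phi (NG_x1 k) = N3 k.
Proof.
rewrite /NG_x1 rmorph_prod !big_ord_recr big_ord0 !Phi_iter Phi_x1 /=.
rewrite !sigX !sigD !sigX !sigC !tauX !sigD !sigX !sigC !comp_polyX comp_polyD comp_polyX comp_polyC.
have e : 'X * ('X + x2P) * ('X + z3P + 2%:R * x2P)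
   * ('X + x2P + z3P + 2%:R * (x2P + z3P)) = N3 k.
  by rewrite two3' !mul0r !addr0 /N3; ring.
rewrite -e; ring.
Qed.

Lemma Phi_NGH : Phi (NGH_x2 k) = Y3 k.
Proof. by rewrite /NGH_x2 rmorphM Phi_sigma Phi_x2 sigC tauX /Y3 /y2 polyCM polyCD. Qed.

Lemma Phi_u : Phi (u k) = U3 k.
Proof.
rewrite /u /U3 /y2 !rmorphD !rmorphM ?rmorphXn !Phi_x1 !Phi_x2 !Phi_x3.
ring.
Qed.

Lemma Phi_comp p : Phi (comp_mpoly [tuple NG_x1 k; NGH_x2 k; x3 k] p) = E k (Phi p).
Proof.
apply: (@mpoly_morph_eq _ _ (fun f => Phi (comp_mpoly [tuple NG_x1 k; NGH_x2 k; x3 k] f))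
     (fun f => E k (Phi f))).
- by move=> a b; rewrite !rmorphD.
- by move=> a b; rewrite rmorphD E_D.
- by move=> a b; rewrite !rmorphM.
- by move=> a b; rewrite rmorphM E_M.
- by rewrite !rmorph1.
- by rewrite rmorph1 -polyC1 E_C comp_polyC.
- by move=> c; rewrite comp_mpolyC PhiC E_C comp_polyC.
case=> [[|[|[|i]]] hi] //; rewrite comp_mpolyXU /=.
- rewrite (_ : 'X_(Ordinal hi) = x1 k) ?Phi_x1; last by congr 'X__; apply: val_inj.
  by rewrite Phi_NG E_X.
- rewrite (_ : 'X_(Ordinal hi) = x2 k) ?Phi_x2; last by congr 'X__; apply: val_inj.
  by rewrite Phi_NGH E_C comp_polyX.
- rewrite (_ : 'X_(Ordinal hi) = x3 k) ?Phi_x3; last by congr 'X__; apply: val_inj.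
  by rewrite E_C comp_polyC.
Qed.


Lemma Ginv_iff (f : MP) : G_invariant f <-> sigma f = f.
Proof.
split; first by move=> /(_ 1%N).
by move=> h i; elim: i => [|i IH] //=; rewrite IH.
Qed.

Lemma Ginv_Phi (f : MP) : G_invariant f <-> sg (Phi f) = Phi f.
Proof.
rewrite Ginv_iff; split; first by move=> e; rewrite -Phi_sigma e.
by move=> e; apply: Phi_inj; rewrite Phi_sigma.
Qed.

Lemma inA_Phi (f : MP) : inA f -> inA3 k (Phi f).
Proof. by move=> [p ->]; exists (Phi p); rewrite Phi_comp. Qed.

Lemma Ginv_u : G_invariant (u k).
Proof. by apply/Ginv_Phi; rewrite Phi_u sigU3. Qed.
Lemma Ginv_1 : G_invariant (1 : MP).
Proof. by apply/Ginv_iff; rewrite /sigma (rmorph1 (comp_mpoly _)). Qed.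

Lemma part1 (f : MP) : G_invariant f ->
     exists a b, [/\ inA a, inA b, f = a + b * u k &
       forall a' b', inA a' -> inA b' -> f = a' + b' * u k -> a' = a /\ b' = b].
Proof.
move=> /Ginv_Phi hf.
have [a3 [b3 [[Pa ea] [Pb eb] e]]] := span3 k two0 _ hf.
pose a := comp_mpoly [tuple NG_x1 k; NGH_x2 k; x3 k] (Psi Pa).
pose b := comp_mpoly [tuple NG_x1 k; NGH_x2 k; x3 k] (Psi Pb).
have Ha : inA a by exists (Psi Pa).
have Hb : inA b by exists (Psi Pb).
have Pha : Phi a = a3 by rewrite /a Phi_comp PhiPsi ea.
have Phb : Phi b = b3 by rewrite /b Phi_comp PhiPsi eb.
have ef : f = a + b * u k.
  by apply: Phi_inj; rewrite rmorphD rmorphM Pha Phb Phi_u.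
exists a, b; split => // a' b' Ha' Hb' e'.
have A1 := inA_Phi _ Ha'; have B1 := inA_Phi _ Hb'.
have A2 := inA_Phi _ Ha; have B2 := inA_Phi _ Hb.
have e2 : Phi a' - Phi a = (Phi b - Phi b') * U3 k.
  have := congr1 Phi e'; rewrite ef !rmorphD !rmorphM Phi_u => e3.
  apply/eqP; rewrite -subr_eq0; apply/eqP.
  move: e3; move: (Phi a') (Phi a) (Phi b) (Phi b') (U3 k) => x1 x2 x3 x4 x5 e3.
  have -> : x1 - x2 - (x3 - x4) * x5 = (x1 + x4 * x5) - (x2 + x3 * x5) by ring.
  by rewrite e3 subrr.
have hb : Phi b - Phi b' = 0.
  by apply: (unique3 k (Phi a' - Phi a)); [apply: inA3_B | apply: inA3_B |].
have hb' : b' = b by apply: Phi_inj; apply/eqP; rewrite eq_sym -subr_eq0 hb.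
split => //; apply: Phi_inj; apply/eqP; rewrite -subr_eq0 e2 hb mul0r //.
Qed.

Local Notation cT := (comp_mpoly [tuple NG_x1 k; NGH_x2 k; x3 k]).

Local Notation trip D := ('I_D.+1 * 'I_D.+1 * 'I_D.+1)%type.
Definition wt {D} (t : trip D) : nat := (4 * t.1.1 + 2 * t.1.2 + t.2)%N.
Definition SS D : {set trip D} := [set t | wt t == D].
Definition mon {D} (t : trip D) : 'X_{1..3} :=
  [multinom [tuple (t.1.1 : nat); (t.1.2 : nat); (t.2 : nat)]].
Definition o0 : 'I_3 := @Ordinal 3 0 isT.
Definition o1 : 'I_3 := @Ordinal 3 1 isT.
Definition o2 : 'I_3 := @Ordinal 3 2 isT.
Definition wm (m : 'X_{1..3}) : nat := (4 * m o0 + 2 * m o1 + m o2)%N.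

Lemma wm_mon D (t : trip D) : wm (mon t) = wt t.
Proof. by rewrite /wm /mon !multinomE. Qed.

Lemma mon_inj D : injective (@mon D).
Proof.
move=> [[a b] c] [[a' b'] c'] /mnmP e.
have e0 := e o0; have e1 := e o1; have e2 := e o2.
rewrite !multinomE /= in e0 e1 e2.
by congr (_, _, _); apply: val_inj.
Qed.

Lemma mon_surj D m : wm m = D -> exists2 t : trip D, t \in SS D & mon t = m.
Proof.
move=> hw.
have h0 : (m o0 < D.+1)%N by rewrite ltnS -hw /wm; lia.
have h1 : (m o1 < D.+1)%N by rewrite ltnS -hw /wm; lia.
have h2 : (m o2 < D.+1)%N by rewrite ltnS -hw /wm; lia.
have em : mon (Ordinal h0, Ordinal h1, Ordinal h2) = m.
  apply/mnmP => i; rewrite multinomE.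
  by case: i => [[|[|[|i]]] hi] //=; congr (fun_of_multinom m _); apply: val_inj.
exists (Ordinal h0, Ordinal h1, Ordinal h2) => //.
by rewrite /SS inE -wm_mon em hw.
Qed.

Lemma homX (i : 'I_3) : ('X_i : MP) \is 1.-homog.
Proof. by rewrite dhomogX; apply/eqP; apply: mdeg1. Qed.

Lemma sigma_lin (a b c : k) :
  sigma (a *: x1 k + b *: x2 k + c *: x3 k) = a *: x1 k + (a + b) *: x2 k + (b + c) *: x3 k.
Proof.
rewrite /sigma !linearD !linearZ /= /x1 /x2 /x3 !comp_mpolyXU /=.
by rewrite !scalerDl !scalerDr; rewrite -/(x1 k) -/(x2 k) -/(x3 k); 
   move: (x1 k) (x2 k) (x3 k) => X1 X2 X3; 
   rewrite !addrA; congr (_ + _); rewrite -!addrA; congr (_ + _); rewrite addrC -!addrA; congr (_ + _); rewrite addrC.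
Qed.

Lemma lin_hom (a b c : k) : a *: x1 k + b *: x2 k + c *: x3 k \is 1.-homog.
Proof. by rewrite !rpredD ?rpredZ ?homX. Qed.

Lemma iter_lin i : exists a b c, iter i (@sigma k) (x1 k) = a *: x1 k + b *: x2 k + c *: x3 k.
Proof.
elim: i => [|i [a [b [c IH]]]].
  by exists 1, 0, 0; rewrite /= !scale0r !addr0 scale1r.
by exists a, (a + b), (b + c); rewrite /= IH sigma_lin.
Qed.

Lemma hom_NG : NG_x1 k \is 4.-homog.
Proof.
rewrite /NG_x1 !big_ord_recr big_ord0 /=.
have h i : iter i (@sigma k) (x1 k) \is 1.-homog.
  by have [a [b [c ->]]] := iter_lin i; exact: lin_hom.
apply: (dhomogM (d := 3) (e := 1)); last exact: (h 3%N).
apply: (dhomogM (d := 2) (e := 1)); last exact: (h 2%N).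
apply: (dhomogM (d := 1) (e := 1)); last exact: (h 1%N).
by apply: (dhomogM (d := 0) (e := 1)); [apply: dhomog1 | exact: (h 0%N)].
Qed.

Lemma hom_NGH : NGH_x2 k \is 2.-homog.
Proof.
rewrite /NGH_x2 /sigma /x2 comp_mpolyXU /=.
by apply: (dhomogM (d := 1) (e := 1)); rewrite ?rpredD ?homX.
Qed.

Lemma hom_u : u k \is 3.-homog.
Proof.
rewrite /u !rpredD //.
- by apply: (dhomogM (d := 2) (e := 1)); rewrite ?homX // (dhomogMn (d := 1)) ?homX.
- by apply: (dhomogM (d := 1) (e := 2)); rewrite ?homX // (dhomogMn (d := 1)) ?homX.
- by rewrite (dhomogMn (d := 1)) ?homX.
- by apply: (dhomogM (d := 2) (e := 1)); rewrite ?homX // (dhomogMn (d := 1)) ?homX.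
Qed.

Lemma hom_cTX m : cT 'X_[m] \is (wm m).-homog.
Proof.
rewrite comp_mpolyX.
have -> : \prod_(i < 3) tnth [tuple NG_x1 k; NGH_x2 k; x3 k] i ^+ m i
    = 1 * NG_x1 k ^+ m o0 * NGH_x2 k ^+ m o1 * x3 k ^+ m o2.
  rewrite !big_ord_recr big_ord0 /= !(tnth_nth 0) /=.
  by congr (_ * _ ^+ _ * _ ^+ _ * _ ^+ _); congr (fun_of_multinom m _); apply: val_inj.
have e : wm m = (0 + 4 * m o0 + 2 * m o1 + 1 * m o2)%N by rewrite /wm; lia.
rewrite e; apply: dhomogM; last by apply: dhomogMn; rewrite /x3 homX.
apply: dhomogM; last by apply: dhomogMn; exact: hom_NGH.
apply: dhomogM; last by apply: dhomogMn; exact: hom_NG.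
exact: dhomog1.
Qed.

Definition proj D (p : MP) : MP := \sum_(t in SS D) p@_(mon t) *: 'X_[mon t].

Lemma proj_coef D p m : (proj D p)@_m = if wm m == D then p@_m else 0.
Proof.
rewrite /proj raddf_sum /=.
under eq_bigr do rewrite mcoeffZ mcoeffX.
case: eqP => hw.
- have [t0 Ht0 et0] := mon_surj _ _ hw.
  rewrite (bigD1 t0) //= et0 eqxx mulr1 big1 ?addr0 // => t /andP [_ nt].
  case: eqP => [e|]; last by rewrite mulr0.
  by rewrite -et0 in e; rewrite (@mon_inj _ _ _ e) eqxx in nt.
- rewrite big1 // => t Ht.
  case: eqP => [e|]; last by rewrite mulr0.
  by exfalso; apply: hw; rewrite -e wm_mon; move: Ht; rewrite inE => /eqP.
Qed.

Lemma proj0 D : proj D 0 = 0.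
Proof. by rewrite /proj big1 // => t _; rewrite mcoeff0 scale0r. Qed.

Lemma proj_supp D p m : m \in msupp (proj D p) -> wm m = D.
Proof. move=> h; apply/eqP; apply: contraTT h => hn; rewrite mcoeff_msupp proj_coef (negbTE hn) eqxx. by []. Qed.

Lemma rest_supp D p m : m \in msupp (p - proj D p) -> wm m != D.
Proof. move=> h; apply: contraTN h => /eqP hw; rewrite mcoeff_msupp mcoeffB proj_coef hw eqxx subrr eqxx. by []. Qed.

Lemma pih_zero D e q v : v \is e.-homog ->
  (forall m, m \in msupp q -> (wm m + e != D)%N) -> pihomog mdeg D (cT q * v) = 0.
Proof.
move=> hv hq; rewrite comp_mpolyEX mulr_suml raddf_sum /= big_seq big1 // => m hm.
rewrite -scalerAl linearZ /= (pihomog_ne0 (hq m hm)) ?scaler0 //.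
exact: dhomogM (hom_cTX m) hv.
Qed.

Lemma hom_id D e q v : v \is e.-homog ->
  (forall m, m \in msupp q -> (wm m + e = D)%N) -> cT q * v \is D.-homog.
Proof.
move=> hv hq; rewrite comp_mpolyEX mulr_suml big_seq; apply: rpred_sum => m hm.
by rewrite -scalerAl; apply: rpredZ; rewrite -(hq m hm); exact: dhomogM (hom_cTX m) hv.
Qed.

Lemma pih_split D e p v : v \is e.-homog -> (e <= D)%N ->
  pihomog mdeg D (cT p * v) = cT (proj (D - e) p) * v.
Proof.
move=> hv hle; rewrite -[p](subrK (proj (D - e) p)) rmorphD mulrDl raddfD /=.
rewrite (pih_zero _ _ _ _ hv); last first.
  by move=> m /rest_supp; apply: contra => /eqP <-; rewrite addnK.
rewrite add0r addrNK pihomog_dE //; apply: (hom_id _ _ _ _ hv) => m /proj_supp ->.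
exact: subnK.
Qed.

Lemma decomp_hom D f pa pb : f \is D.-homog -> f = cT pa + cT pb * u k ->
  f = cT (proj D pa) + (if (3 <= D)%N then cT (proj (D - 3) pb) * u k else 0).
Proof.
move=> hf ef.
rewrite -(pihomog_dE hf) ef raddfD /=.
have -> : pihomog mdeg D (cT pa) = cT (proj D pa).
  by rewrite -[cT pa]mulr1 (pih_split _ _ _ _ (dhomog1 _ _)) // subn0 mulr1.
case: (leqP 3 D) => h3; first by rewrite (pih_split _ _ _ _ hom_u).
rewrite (pih_zero _ _ _ _ hom_u) ?addr0 // => m _.
by rewrite neq_ltn (leq_trans h3) ?orbT // leq_addl.
Qed.

Lemma E_eq0 P : E k P = 0 -> P = 0.
Proof.
move=> e; apply/eqP; apply: contraT => nz.
by have := size_E k P nz; rewrite e size_poly0.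
Qed.

Lemma cT_inj q : cT q = 0 -> q = 0.
Proof.
move=> e; apply: Phi_inj; rewrite rmorph0; apply: E_eq0.
by rewrite -Phi_comp e rmorph0.
Qed.

Lemma sig_E P : sg (E k P) = E k P.
Proof.
apply: (@poly_morph_eq _ _ (fun P => sg (E k P)) (E k)).
- by move=> a b; rewrite E_D sigD.
- by move=> a b; rewrite E_D.
- by move=> a b; rewrite E_M sigM.
- by move=> a b; rewrite E_M.
- by move=> c; rewrite E_C sigC (tau_inB k two0) //; exists c.
by rewrite E_X sigN3.
Qed.

Lemma Ginv_inA (f : MP) : inA f -> G_invariant f.
Proof. by move=> /inA_Phi [P e]; apply/Ginv_Phi; rewrite e sig_E. Qed.

Lemma indepA D (c : 'I_#|SS D| -> k) :
  \sum_j c j *: 'X_[mon (enum_val j)] = 0 -> forall j, c j = 0.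
Proof.
move=> e j; have := congr1 (mcoeff (mon (enum_val j))) e.
rewrite raddf_sum mcoeff0 (bigD1 j) //= mcoeffZ mcoeffX eqxx mulr1 big1 ?addr0 // => i ne.
rewrite mcoeffZ mcoeffX; case: eqP => [/mon_inj /enum_val_inj eij|]; last by rewrite mulr0.
by rewrite eij eqxx in ne.
Qed.

Lemma cT_sum D (c : 'I_#|SS D| -> k) :
  cT (\sum_j c j *: 'X_[mon (enum_val j)]) = \sum_j c j *: cT 'X_[mon (enum_val j)].
Proof. by rewrite raddf_sum; apply: eq_bigr => j _ /=; rewrite comp_mpolyZ. Qed.

Lemma cT_proj D p :
  cT (proj D p) = \sum_(j < #|SS D|) p@_(mon (enum_val j)) *: cT 'X_[mon (enum_val j)].
Proof. by rewrite /proj raddf_sum big_enum_val; apply: eq_bigr => j _ /=; rewrite comp_mpolyZ. Qed.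

Lemma has_dim_2 (P : MP -> Prop) n1 n2 (b1 : 'I_n1 -> MP) (b2 : 'I_n2 -> MP) :
  (forall i, P (b1 i)) -> (forall j, P (b2 j)) ->
  (forall (c1 : 'I_n1 -> k) (c2 : 'I_n2 -> k),
     \sum_i c1 i *: b1 i + \sum_j c2 j *: b2 j = 0 ->
     (forall i, c1 i = 0) /\ (forall j, c2 j = 0)) ->
  (forall f, P f -> exists (c1 : 'I_n1 -> k) (c2 : 'I_n2 -> k),
     f = \sum_i c1 i *: b1 i + \sum_j c2 j *: b2 j) ->
  has_dim P (n1 + n2).
Proof.
move=> P1 P2 ind sp.
have sl j : split (lshift n2 j) = inl j := unsplitK (inl j).
have sr j : split (rshift n1 j) = inr j := unsplitK (inr j).
pose b i := match split i with inl j => b1 j | inr j => b2 j end.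
exists b; split.
- by move=> i; rewrite /b; case: (split i).
- move=> c e i.
  have E0 : \sum_i c (lshift n2 i) *: b1 i + \sum_j c (rshift n1 j) *: b2 j = 0.
    rewrite big_split_ord /= in e; apply: (etrans _ e); congr (_ + _).
      by apply: eq_bigr => j _; rewrite /b sl.
    by apply: eq_bigr => j _; rewrite /b sr.
  have [h1 h2] := ind _ _ E0.
  rewrite -(splitK i); case: (split i) => j /=; [exact: h1 | exact: h2].
- move=> f /sp [c1 [c2 ->]].
  exists (fun i => match split i with inl j => c1 j | inr j => c2 j end).
  rewrite big_split_ord /=; congr (_ + _).
    by apply: eq_bigr => j _; rewrite /b sl.
  by apply: eq_bigr => j _; rewrite /b sr.
Qed.

Definition hA D := #|SS D|.
Definition hM D := (#|SS D| + if (3 <= D)%N then #|SS (D - 3)| else 0)%N.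

Lemma hom_basis D (j : 'I_#|SS D|) : cT 'X_[mon (enum_val j)] \is D.-homog.
Proof.
have := enum_valP j; rewrite inE => /eqP hw.
by have := hom_cTX (mon (enum_val j)); rewrite wm_mon hw.
Qed.

Lemma inA_basis D (j : 'I_#|SS D|) : inA (cT 'X_[mon (enum_val j)]).
Proof. by exists 'X_[mon (enum_val j)]. Qed.

Lemma hil_A : hilbert_fun (@inA k) hA.
Proof.
move=> D; rewrite /hA -[#|SS D|]addn0.
apply: (@has_dim_2 _ _ _ (fun j => cT 'X_[mon (enum_val j)]) (fun _ => 0)).
- by move=> j; split; [exact: inA_basis | exact: hom_basis].
- by case.
- move=> c1 c2; rewrite big_ord0 addr0 -cT_sum => /cT_inj e.
  by split; [exact: indepA e | case].
move=> f [[p ep] hf].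
have := decomp_hom D f p 0 hf; rewrite ep rmorph0 mul0r addr0 proj0 rmorph0 mul0r.
rewrite if_same addr0 => /(_ erefl) e.
exists (fun j => p@_(mon (enum_val j))), (fun _ => 0).
by rewrite big_ord0 addr0 -cT_proj.
Qed.

Lemma indep_sum D1 D2 (c1 : 'I_#|SS D1| -> k) (c2 : 'I_#|SS D2| -> k) :
  \sum_i c1 i *: cT 'X_[mon (enum_val i)] + \sum_j c2 j *: (cT 'X_[mon (enum_val j)] * u k) = 0 ->
  (forall i, c1 i = 0) /\ (forall j, c2 j = 0).
Proof.
move=> e.
have e2 : \sum_j c2 j *: (cT 'X_[mon (enum_val j)] * u k)
    = cT (\sum_j c2 j *: 'X_[mon (enum_val j)]) * u k.
  by rewrite cT_sum mulr_suml; apply: eq_bigr => j _; rewrite scalerAl.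
rewrite e2 -cT_sum in e.
set qa := \sum_i _ in e; set qb := \sum_j _ in e.
have hb0 : 0 - Phi (cT qb) = 0.
  apply: (unique3 k (Phi (cT qa))).
  - by apply: inA_Phi; exists qa.
  - by apply: inA3_B; [exact: inA3_0 | apply: inA_Phi; exists qb].
  have := congr1 Phi e; rewrite rmorphD rmorphM rmorph0 Phi_u.
  move: (Phi (cT qa)) (Phi (cT qb)) (U3 k) => x y z exy.
  by rewrite -[x](addrK (y * z)) exy; ring.
have hb : Phi (cT qb) = 0.
  by move: hb0; rewrite sub0r => /eqP; rewrite oppr_eq0 => /eqP.
have hqb : qb = 0 by apply: cT_inj; apply: Phi_inj; rewrite hb rmorph0.
rewrite hqb rmorph0 mul0r addr0 in e.
split; first exact: indepA (cT_inj _ e).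
exact: indepA hqb.
Qed.

Lemma hil_M : hilbert_fun (@G_invariant k) hM.
Proof.
move=> D; rewrite /hM; case: (leqP 3 D) => h3.
  apply: (@has_dim_2 _ _ _ (fun j => cT 'X_[mon (@enum_val _ (pred_of_set (SS D)) j)])
                           (fun j => cT 'X_[mon (@enum_val _ (pred_of_set (SS (D - 3))) j)] * u k)).
  - by move=> j; split; [apply: Ginv_inA; exact: inA_basis | exact: hom_basis].
  - move=> j; split.
      have sM (x y : MP) : sigma (x * y) = sigma x * sigma y by rewrite /sigma rmorphM.
      apply/Ginv_iff; rewrite sM.
      have h1 := Ginv_inA _ (inA_basis (D - 3) j); have h2 := Ginv_u.
      by move/Ginv_iff: h1 => ->; move/Ginv_iff: h2 => ->.
    by have := dhomogM (hom_basis (D - 3) j) hom_u; rewrite subnK.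
  - by move=> c1 c2; apply: indep_sum.
  move=> f [hfi hf].
  have [a [b [[pa ea] [pb eb] ef _]]] := part1 f hfi.
  have := decomp_hom D f pa pb hf; rewrite -ea -eb h3 => /(_ ef) ->.
  exists (fun j => pa@_(mon (enum_val j))), (fun j => pb@_(mon (enum_val j))).
  rewrite !cT_proj mulr_suml; congr (_ + _); apply: eq_bigr => j _; rewrite scalerAl //.
apply: (@has_dim_2 _ _ _ (fun j => cT 'X_[mon (@enum_val _ (pred_of_set (SS D)) j)])
                         (fun _ : 'I_0 => 0)).
- by move=> j; split; [apply: Ginv_inA; exact: inA_basis | exact: hom_basis].
- by case.
- move=> c1 c2; rewrite big_ord0 addr0 -cT_sum => /cT_inj e.
  by split; [exact: indepA e | case].
move=> f [hfi hf].
have [a [b [[pa ea] [pb eb] ef _]]] := part1 f hfi.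
have := decomp_hom D f pa pb hf; rewrite -ea -eb leqNgt h3 /= => /(_ ef) ->.
exists (fun j => pa@_(mon (enum_val j))), (fun _ => 0).
by rewrite big_ord0 !addr0 cT_proj.
Qed.

End Transfer.

Lemma sum_ind n j (F : nat -> rat) :
  \sum_(i < n) ((i == j :> nat)%:R * F i) = if (j < n)%N then F j else 0.
Proof.
case: ltnP => hj.
  rewrite (bigD1 (Ordinal hj)) //= eqxx mul1r big1 ?addr0 // => i ne.
  case: eqP => [eij|]; last by rewrite mul0r.
  by exfalso; move: ne; rewrite -val_eqE /= eij eqxx.
rewrite big1 // => i _.
by case: eqP => [eij|]; [move: (ltn_ord i); rewrite eij ltnNge hj | rewrite mul0r].
Qed.

Theorem mainTheorem13 (k : fieldType) (char2 : 2 \in [pchar k]) :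
  (* k[V]^G is a free A-module with basis {1, u} *)
  (G_invariant (1 : {mpoly k[3]}) /\ G_invariant (u k) /\
   forall f : {mpoly k[3]}, G_invariant f ->
     exists a b, [/\ inA a, inA b, f = a + b * u k &
       forall a' b', inA a' -> inA b' -> f = a' + b' * u k -> a' = a /\ b' = b])
  /\
  (* H(k[V]^G,t) / H(A,t) = q(t), so r = q(1) = 2 and s = q'(1) = 3 *)
  (exists (hM hA : nat -> nat) (q : {poly rat}),
     [/\ hilbert_fun (@G_invariant k) hM, hilbert_fun (@inA k) hA,
         (forall d : nat, (hM d)%:R = \sum_(i < d.+1) q`_i * (hA (d - i)%N)%:R),
         q.[1] = 2 & (q^`()).[1] = 3]).
Proof.
have two0 : (2%:R : k) = 0 := pcharf0 char2.
split.
  split; first exact: Ginv_1.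
  split; first exact: Ginv_u k two0.
  by move=> f hf; exact: part1 k two0 f hf.
exists hM, hA, (1 + 'X^3); split.
- exact: hil_M k two0.
- exact: hil_A k two0.
- move=> d.
  under eq_bigr do rewrite coefD coef1 coefXn mulrDl.
  rewrite big_split /= (sum_ind _ 0 (fun i => (hA (d - i))%:R)) (sum_ind _ 3 (fun i => (hA (d - i))%:R)) /= subn0 ltnS /hM /hA natrD.
  by case: (3 <= d)%N.
- by rewrite !hornerE.
- by rewrite derivD derivC derivXn add0r !hornerE.
Qed.
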